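(* For every pointed pseudotopological space $(X,x_0)$ and every pointed epitopological space $(X',x_0')$, concatenation and inversion of loops give $\Omega^{\mathrm{ps}}(X,x_0)$ (in the category of pointed pseudotopological spaces) and $\Omega^{\mathrm{epi}}(X',x_0')$ (in the category of pointed epitopological spaces) the structure of H-groups.
   Context: For a set $X$, $U(X)$ is the set of ultrafilters on $X$, $\dot x$ the principal ultrafilter at $x$; $f_*\mathscr F=\{S:f^{-1}(S)\in\mathscr F\}$. A pseudotopological space is a set $X$ with $u\subset U(X)\times X$ containing all $(\dot x,x)$; write $\mathscr U\to x$; for a filter, $\mathscr F\to x$ means every finer ultrafilter converges to $x$. Continuous maps: $\mathscr U\to x\Rightarrow f_*\mathscr U\to f(x)$. Subspaces and products carry initial structures. Topological spaces are regarded as pseudotopological via ultrafilter convergence. For pseudotopological $X,Y$, $Y^X$ is the set of continuous maps $X\to Y$ with: a filter $\mathscr F\to f$ iff for every filter $\mathscr G\to x$ in $X$, $\mathrm{ev}_*(\mathscr F\times\mathscr G)\to f(x)$. A pseudotopological space is epitopological if its structure is initial w.r.t. some family of maps $X\to Z_j^{Y_j}$, $Y_j,Z_j$ topological; these form the cartesian closed category $\mathsf{EpiTop}$ with the same products and subspaces. $\Omega^{\mathrm{ps}}(X,x_0)$ is the set of loops $l\colon[0,1]\to X$ with $l(0)=l(1)=x_0$ with the subspace structure of $X^{[0,1]}$, basepoint the constant loop $e$; $\Omega^{\mathrm{epi}}$ is the same using the exponential object of $\mathsf{EpiTop}$. Concatenation: $(l\cdot l')(t)=l(2t)$ for $t\le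 1/2$ and $l'(2t-1)$ for $t\ge1/2$; inversion: $l^{-1}(t)=l(1-t)$. Two pointed continuous maps $f,g\colon (A,a_0)\to(B,b_0)$ are pointed homotopic if there is a continuous $H\colon A\times[0,1]\to B$ with $H(\cdot,0)=f$, $H(\cdot,1)=g$, $H(a_0,s)=b_0$ for all $s$. An H-group structure on a pointed space $(A,a_0)$ consists of pointed continuous maps $\wedge\colon A\times A\to A$ and $\sigma\colon A\to A$ such that: $x\mapsto x\wedge a_0$ and $x\mapsto a_0\wedge x$ are pointed homotopic to $\mathrm{id}_A$; $x\mapsto x\wedge\sigma(x)$ and $x\mapsto\sigma(x)\wedge x$ are pointed homotopic to the constant map at $a_0$; $(x,x',x'')\mapsto(x\wedge x')\wedge x''$ is pointed homotopic to $(x,x',x'')\mapsto x\wedge(x'\wedge x'')$. *)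

(* Defs.v *)
From Stdlib Require Import Reals Lra.
Open Scope R_scope.
Set Implicit Arguments.

Definition filt (X : Type) := (X -> Prop) -> Prop.

Record is_filter (X : Type) (F : filt X) : Prop := {
  filter_full : F (fun _ => True);
  filter_mono : forall A B : X -> Prop, (forall x, A x -> B x) -> F A -> F B;
  filter_inter : forall A B : X -> Prop, F A -> F B -> F (fun x => A x /\ B x);
  filter_proper : ~ F (fun _ => False) }.

Definition is_ultra (X : Type) (U : filt X) : Prop :=
  is_filter U /\ forall A : X -> Prop, U A \/ U (fun x => ~ A x).

Definition principal (X : Type) (x : X) : filt X := fun A => A x.

Definition pushf (X Y : Type) (f : X -> Y) (F : filt X) : filt Y :=
  fun S => F (fun x => S (f x)).

Definition finer (X : Type) (G F : filt X) : Prop := forall A, F A -> G A.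

Definition fprod (X Y : Type) (F : filt X) (G : filt Y) : filt (X * Y) :=
  fun S => exists (A : X -> Prop) (B : Y -> Prop),
    F A /\ G B /\ forall a b, A a -> B b -> S (a, b).

(** * Convergence structures (a relation between ultrafilters and points). *)
Record PsStr := { pcar :> Type; conv : filt pcar -> pcar -> Prop }.

Definition pseudotop (X : PsStr) : Prop :=
  (forall U x, conv X U x -> is_ultra U) /\ (forall x : X, conv X (principal x) x).

Definition fconv (X : PsStr) (F : filt X) (x : X) : Prop :=
  forall U, is_ultra U -> finer U F -> conv X U x.

Definition continuous (X Y : PsStr) (f : X -> Y) : Prop :=
  forall U x, conv X U x -> conv Y (pushf f U) (f x).

Definition prodPs (X Y : PsStr) : PsStr :=
  {| pcar := (X * Y)%type;
     conv := fun U p => is_ultra U /\ conv X (pushf fst U) (fst p)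
                                   /\ conv Y (pushf snd U) (snd p) |}.

Definition subPs (X : PsStr) (P : X -> Prop) : PsStr :=
  {| pcar := {x : X | P x};
     conv := fun U x => is_ultra U /\ conv X (pushf (@proj1_sig _ _) U) (proj1_sig x) |}.

Definition CF (X Y : PsStr) : Type := {f : X -> Y | continuous X Y f}.

Definition evCF (X Y : PsStr) (p : CF X Y * X) : Y := proj1_sig (fst p) (snd p).

Definition exp_conv (X Y : PsStr) : filt (CF X Y) -> CF X Y -> Prop :=
  fun U f => is_ultra U /\
    forall (G : filt X) (x : X), is_filter G -> fconv X G x ->
      fconv Y (pushf (fun p => @evCF X Y p) (fprod U G)) (proj1_sig f x).

Definition expPs (X Y : PsStr) : PsStr := {| pcar := CF X Y; conv := @exp_conv X Y |}.

Record TopSp := { tcar : Type; opens : (tcar -> Prop) -> Prop }.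

Definition is_topology (T : TopSp) : Prop :=
  opens T (fun _ => True) /\
  (forall A B, opens T A -> opens T B -> opens T (fun x => A x /\ B x)) /\
  (forall (J : Type) (O : J -> tcar T -> Prop), (forall j, opens T (O j)) ->
     opens T (fun x => exists j, O j x)).

Definition top2ps (T : TopSp) : PsStr :=
  {| pcar := tcar T;
     conv := fun U x => is_ultra U /\ forall O, opens T O -> O x -> U O |}.

(** * Epitopological spaces: initial w.r.t. a family of maps into Z_j^{Y_j} *)
Definition epitop (X : PsStr) : Prop :=
  pseudotop X /\
  exists (J : Type) (Y Z : J -> TopSp)
         (f : forall j, X -> expPs (top2ps (Y j)) (top2ps (Z j))),
    (forall j, is_topology (Y j) /\ is_topology (Z j)) /\
    forall U x, conv X U x <->
      (is_ultra U /\ forall j, conv _ (pushf (f j) U) (f j x)).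

(** A structure [s] on the set of continuous maps A -> B is the exponential
    object of EpiTop (with evaluation as counit): it is epitopological,
    evaluation is continuous, and every continuous h : C x A -> B with C
    epitopological has a continuous transpose C -> B^A. *)
Definition epi_exp_structure (A B : PsStr) (s : filt (CF A B) -> CF A B -> Prop) : Prop :=
  let E := {| pcar := CF A B; conv := s |} in
  epitop E /\
  continuous (prodPs E A) B (fun p => proj1_sig (fst p) (snd p)) /\
  forall C : PsStr, epitop C -> forall h : C * A -> B, continuous (prodPs C A) B h ->
    exists hc : C -> E, continuous C E hc /\ forall c a, proj1_sig (hc c) a = h (c, a).

Definition Icar : Type := {t : R | 0 <= t <= 1}.

Definition Itop : TopSp :=
  {| tcar := Icar;
     opens := fun O => forall t, O t -> exists eps, eps > 0 /\
               forall s : Icar, Rabs (proj1_sig s - proj1_sig t) < eps -> O s |}.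

Definition Ips : PsStr := top2ps Itop.

Lemma I0_proof : 0 <= 0 <= 1. Proof. lra. Qed.
Lemma I1_proof : 0 <= 1 <= 1. Proof. lra. Qed.
Definition I0 : Ips := exist _ 0 I0_proof.
Definition I1 : Ips := exist _ 1 I1_proof.

Lemma clamp_proof (r : R) : 0 <= Rmax 0 (Rmin 1 r) <= 1.
Proof.
  split; [apply Rmax_l|]. apply Rmax_lub; [lra| apply Rmin_l].
Qed.
(** clamp r : the point of [0,1] closest to r (only used for r in [0,1]) *)
Definition clamp (r : R) : Icar := exist _ (Rmax 0 (Rmin 1 r)) (clamp_proof r).

Definition concat_fun (X : Type) (l l' : Icar -> X) (t : Icar) : X :=
  if Rle_dec (proj1_sig t) (1/2) then l (clamp (2 * proj1_sig t))
  else l' (clamp (2 * proj1_sig t - 1)).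

Definition inv_fun (X : Type) (l : Icar -> X) (t : Icar) : X :=
  l (clamp (1 - proj1_sig t)).

Definition OmegaPs (X : PsStr) (s : filt (CF Ips X) -> CF Ips X -> Prop) (x0 : X) : PsStr :=
  subPs {| pcar := CF Ips X; conv := s |}
        (fun f => proj1_sig f I0 = x0 /\ proj1_sig f I1 = x0).

Definition loopf (X : PsStr) s (x0 : X) (l : OmegaPs s x0) : Icar -> X :=
  proj1_sig (proj1_sig l).

Definition phomotopic (A B : PsStr) (a0 : A) (b0 : B) (f g : A -> B) : Prop :=
  exists H : prodPs A Ips -> B,
    continuous (prodPs A Ips) B H /\
    (forall a, H (a, I0) = f a) /\ (forall a, H (a, I1) = g a) /\
    (forall s, H (a0, s) = b0).

Definition Hgroup (A : PsStr) (a0 : A) (w : prodPs A A -> A) (sg : A -> A) : Prop :=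
  continuous (prodPs A A) A w /\ w (a0, a0) = a0 /\
  continuous A A sg /\ sg a0 = a0 /\
  @phomotopic A A a0 a0 (fun x => w (x, a0)) (fun x => x) /\
  @phomotopic A A a0 a0 (fun x => w (a0, x)) (fun x => x) /\
  @phomotopic A A a0 a0 (fun x => w (x, sg x)) (fun _ => a0) /\
  @phomotopic A A a0 a0 (fun x => w (sg x, x)) (fun _ => a0) /\
  @phomotopic (prodPs (prodPs A A) A) A ((a0, a0), a0) a0
    (fun p => w (w (fst (fst p), snd (fst p)), snd p))
    (fun p => w (fst (fst p), w (snd (fst p), snd p))).

Definition loops_Hgroup (X : PsStr) (x0 : X) (s : filt (CF Ips X) -> CF Ips X -> Prop) : Prop :=
  exists (e : OmegaPs s x0) (w : prodPs (OmegaPs s x0) (OmegaPs s x0) -> OmegaPs s x0)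
         (sg : OmegaPs s x0 -> OmegaPs s x0),
    (forall t, loopf e t = x0) /\
    (forall l l' t, loopf (w (l, l')) t = concat_fun (loopf l) (loopf l') t) /\
    (forall l t, loopf (sg l) t = inv_fun (loopf l) t) /\
    Hgroup e w sg.

(* Main.v *)
Require Import Defs.
From Stdlib Require Import Reals.
From Stdlib Require Import Lra Psatz ProofIrrelevance FunctionalExtensionality PropExtensionality Classical.
From mathcomp Require classical_sets filter boolp.

Lemma ultra_lemma (X : Type) (F : filt X) : is_filter F -> exists U, is_ultra U /\ finer U F.
Proof.
intros HF.
assert (PF : filter.ProperFilter (F : classical_sets.set_system X)).
{ destruct HF as [h1 h2 h3 h4].
  constructor.
  - exact h4.
  - constructor.
    + exact h1.
    + intros A B HA HB. exact (h3 A B HA HB).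
    + intros A B HAB HA. exact (h2 A B HAB HA). }
destruct (filter.ultraFilterLemma PF) as [G [UG FG]].
exists G. split; [|exact FG].
pose proof (@filter.ultra_proper _ _ UG) as PG.
destruct PG as [g1 [g2 g3 g4]].
split.
- constructor.
  + exact g2.
  + intros A B H HA. exact (g4 A B H HA).
  + intros A B HA HB. exact (g3 A B HA HB).
  + exact g1.
- intros A. exact (filter.in_ultra_setVsetC A UG).
Qed.

Open Scope R_scope.
Set Implicit Arguments.

Lemma ultra_filter X (U : filt X) : is_ultra U -> is_filter U.
Proof. intros [h _]; exact h. Qed.

Lemma ultra_push X Y (f : X -> Y) U : is_ultra U -> is_ultra (pushf f U).
Proof.
  intros [[h1 h2 h3 h4] h5]. split.
  - constructor; unfold pushf; simpl.
    + exact h1.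
    + intros A B HAB HA. apply (h2 _ _ (fun x => HAB (f x)) HA).
    + intros A B HA HB. exact (h3 _ _ HA HB).
    + exact h4.
  - intros A. exact (h5 (fun x => A (f x))).
Qed.

Lemma principal_ultra X (x : X) : is_ultra (principal x).
Proof.
  split. constructor; unfold principal; auto. intros A. unfold principal. apply classic.
Qed.

Lemma filt_ext X (F G : filt X) : (forall S, F S <-> G S) -> F = G.
Proof.
  intros H. apply functional_extensionality. intros S. apply propositional_extensionality. apply H.
Qed.

Lemma ultra_max X (U G : filt X) : is_ultra U -> is_filter G -> finer G U -> G = U.
Proof.
  intros [_ HU] HG Hf. apply filt_ext. intros S. split; [|apply Hf].
  intros GS. destruct (HU S) as [h|h]; auto.
  exfalso. apply (filter_proper HG). apply (filter_mono HG (fun x => S x /\ ~ S x)).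
  - intros x [a b]; auto.
  - apply filter_inter; auto.
Qed.

Lemma push_const X Y (y : Y) (U : filt X) : is_filter U -> pushf (fun _ => y) U = principal y.
Proof.
  intros HU. apply filt_ext. intros S. unfold pushf, principal. split.
  - intros h. apply NNPP. intros n. apply (filter_proper HU).
    apply (filter_mono HU _ _ (fun x (H : S y) => n H) h).
  - intros h. apply (filter_mono HU (fun _ => True)); auto. apply filter_full; auto.
Qed.

Lemma Icar_eq (a b : Icar) : proj1_sig a = proj1_sig b -> a = b.
Proof.
  destruct a as [a pa], b as [b pb]; simpl; intros ->. f_equal. apply proof_irrelevance.
Qed.

Definition conv_ultra (A : PsStr) := forall U x, conv A U x -> is_ultra U.

Lemma cont_comp (A B C : PsStr) (f : A -> B) (g : B -> C) :
  continuous A B f -> continuous B C g -> continuous A C (fun x => g (f x)).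
Proof. intros hf hg U x h. exact (hg _ _ (hf _ _ h)). Qed.

Lemma cont_pair (A B C : PsStr) (f : A -> B) (g : A -> C) : conv_ultra A ->
  continuous A B f -> continuous A C g -> continuous A (prodPs B C) (fun x => (f x, g x)).
Proof.
  intros hA hf hg U x h. split; [apply ultra_push; exact (hA _ _ h)|].
  split; [exact (hf _ _ h)| exact (hg _ _ h)].
Qed.

Lemma cont_fst (A B : PsStr) : continuous (prodPs A B) A fst.
Proof. intros U x [_ [h _]]. exact h. Qed.
Lemma cont_snd (A B : PsStr) : continuous (prodPs A B) B snd.
Proof. intros U x [_ [_ h]]. exact h. Qed.

Lemma conv_ultra_prod A B : conv_ultra (prodPs A B).
Proof. intros U x [h _]; exact h. Qed.
Lemma conv_ultra_sub A P : conv_ultra (subPs A P).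
Proof. intros U x [h _]; exact h. Qed.

Lemma cont_const (A B : PsStr) (b : B) : pseudotop B -> conv_ultra A ->
  continuous A B (fun _ => b).
Proof.
  intros hB hA U x h. rewrite push_const. apply (proj2 hB). apply ultra_filter; exact (hA _ _ h).
Qed.

Lemma cont_proj1 (A : PsStr) P : continuous (subPs A P) A (@proj1_sig _ _).
Proof. intros U x [_ h]. exact h. Qed.

Lemma cont_into_sub (A B : PsStr) P (f : A -> subPs B P) : conv_ultra A ->
  continuous A B (fun x => proj1_sig (f x)) -> continuous A (subPs B P) f.
Proof. intros hA hf U x h. split; [apply ultra_push; exact (hA _ _ h)| exact (hf _ _ h)]. Qed.

Ltac rdest := repeat (match goal with |- context [Rle_dec ?x ?y] =>
  lazymatch x with context[Rle_dec _ _] => fail | _ =>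
  lazymatch y with context [Rle_dec _ _] => fail | _ => destruct (Rle_dec x y) end end end).
Ltac adest := repeat (match goal with |- context [Rcase_abs ?x] =>
  lazymatch x with context[Rcase_abs _] => fail | _ => destruct (Rcase_abs x) end end).
Definition v (p : Icar) : R := proj1_sig p.
Definition cv (r : R) : R := Rmax 0 (Rmin 1 r).

Lemma v_bounds (p : Icar) : 0 <= v p <= 1.
Proof. exact (proj2_sig p). Qed.

Lemma cv_lip a b : Rabs (cv a - cv b) <= Rabs (a - b).
Proof.
  unfold cv, Rmax, Rmin. rdest; unfold Rabs; adest; lra.
Qed.

Lemma cv_id r : 0 <= r <= 1 -> cv r = r.
Proof. unfold cv, Rmax, Rmin; intros; rdest; lra. Qed.

Lemma cv_bounds r : 0 <= cv r <= 1.
Proof. unfold cv, Rmax, Rmin; rdest; lra. Qed.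

Lemma v_clamp r : v (clamp r) = cv r.
Proof. reflexivity. Qed.

Definition rcont (C : PsStr) (g : C -> R) : Prop :=
  forall U c, conv C U c -> is_filter U -> forall eps, eps > 0 -> U (fun x => Rabs (g x - g c) < eps).

Lemma rcont_const (C : PsStr) (r : R) : rcont C (fun _ => r).
Proof.
  intros U c _ HU eps he. apply (filter_mono HU (fun _ => True)); [|apply filter_full; auto].
  intros; rewrite Rminus_diag, Rabs_R0; lra.
Qed.

Lemma rcont_I (C : PsStr) (f : C -> Ips) : continuous C Ips f -> rcont C (fun x => v (f x)).
Proof.
  intros hf U c h HU eps he. destruct (hf _ _ h) as [_ H].
  apply (H (fun p => Rabs (proj1_sig p - proj1_sig (f c)) < eps)).
  - simpl. intros t ht. exists (eps - Rabs (proj1_sig t - proj1_sig (f c))). split; [lra|].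
    intros s hs. 
    replace (proj1_sig s - proj1_sig (f c)) with ((proj1_sig s - proj1_sig t) + (proj1_sig t - proj1_sig (f c))) by ring.
    eapply Rle_lt_trans; [apply Rabs_triang|]. lra.
  - rewrite Rminus_diag, Rabs_R0; lra.
Qed.

Lemma rcont_plus (C : PsStr) f g : rcont C f -> rcont C g -> rcont C (fun x => f x + g x).
Proof.
  intros hf hg U c h HU eps he.
  apply (filter_mono HU (fun x => Rabs (f x - f c) < eps/2 /\ Rabs (g x - g c) < eps/2)).
  - intros x [a b].
    replace (f x + g x - (f c + g c)) with ((f x - f c) + (g x - g c)) by ring.
    eapply Rle_lt_trans; [apply Rabs_triang|]. lra.
  - apply filter_inter; auto; [apply hf|apply hg]; auto; lra.
Qed.

Lemma rcont_scal (C : PsStr) (k : R) f : rcont C f -> rcont C (fun x => k * f x).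
Proof.
  intros hf U c h HU eps he.
  apply (filter_mono HU (fun x => Rabs (f x - f c) < eps / (Rabs k + 1))).
  - intros x hx. replace (k * f x - k * f c) with (k * (f x - f c)) by ring.
    rewrite Rabs_mult. pose proof (Rabs_pos k). pose proof (Rabs_pos (f x - f c)).
    apply Rle_lt_trans with ((Rabs k + 1) * Rabs (f x - f c)). nra.
    apply Rmult_lt_reg_r with (/ (Rabs k + 1)). apply Rinv_0_lt_compat; lra.
    replace ((Rabs k + 1) * Rabs (f x - f c) * / (Rabs k + 1)) with (Rabs (f x - f c)) by (field; lra).
    exact hx.
  - apply hf; auto. apply Rdiv_lt_0_compat; [lra|]. pose proof (Rabs_pos k); lra.
Qed.

Lemma mult_bound a b a' b' : Rabs a <= 1 -> Rabs b' <= 1 -> Rabs (a * b - a' * b') <= Rabs (b - b') + Rabs (a - a').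
Proof.
  intros ha hb. replace (a * b - a' * b') with (a * (b - b') + b' * (a - a')) by ring.
  eapply Rle_trans; [apply Rabs_triang|]. rewrite !Rabs_mult.
  pose proof (Rabs_pos (b - b')). pose proof (Rabs_pos (a - a')).
  apply Rplus_le_compat; nra.
Qed.

Lemma rcont_mult (C : PsStr) f g : (forall x, Rabs (f x) <= 1) -> (forall x, Rabs (g x) <= 1) ->
  rcont C f -> rcont C g -> rcont C (fun x => f x * g x).
Proof.
  intros bf bg hf hg U c h HU eps he.
  apply (filter_mono HU (fun x => Rabs (f x - f c) < eps/2 /\ Rabs (g x - g c) < eps/2)).
  - intros x [a b]. eapply Rle_lt_trans; [apply mult_bound; auto|]. lra.
  - apply filter_inter; auto; [apply hf|apply hg]; auto; lra.
Qed.

Lemma rcont_cv (C : PsStr) f : rcont C f -> rcont C (fun x => cv (f x)).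
Proof.
  intros hf U c h HU eps he. apply (filter_mono HU (fun x => Rabs (f x - f c) < eps)).
  - intros x hx. eapply Rle_lt_trans; [apply cv_lip|exact hx].
  - apply hf; auto.
Qed.

Lemma cont_clamp (C : PsStr) f : conv_ultra C -> rcont C f -> continuous C Ips (fun x => clamp (f x)).
Proof.
  intros hC hf U c h. split; [apply ultra_push; exact (hC _ _ h)|].
  intros O HO Oc. destruct (HO _ Oc) as [eps [he hb]].
  apply (filter_mono (ultra_filter (hC _ _ h)) (fun x => Rabs (f x - f c) < eps)).
  - intros x hx. apply hb. change (Rabs (cv (f x) - cv (f c)) < eps).
    eapply Rle_lt_trans; [apply cv_lip|exact hx].
  - apply hf; auto. apply ultra_filter; exact (hC _ _ h).
Qed.

Lemma closed_le (C : PsStr) k U c : rcont C k -> conv C U c -> is_filter U -> U (fun x => k x <= 0) -> k c <= 0.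
Proof.
  intros hk h HU H. apply Rnot_lt_le. intros lt. apply (filter_proper HU).
  apply (filter_mono HU (fun x => k x <= 0 /\ Rabs (k x - k c) < k c)).
  - intros x [a b]. unfold Rabs in b. destruct (Rcase_abs (k x - k c)); lra.
  - apply filter_inter; auto. apply hk; auto; lra.
Qed.

Lemma closed_ge (C : PsStr) k U c : rcont C k -> conv C U c -> is_filter U -> U (fun x => k x >= 0) -> k c >= 0.
Proof.
  intros hk h HU H. apply Rle_ge, Rnot_lt_le. intros lt. apply (filter_proper HU).
  apply (filter_mono HU (fun x => k x >= 0 /\ Rabs (k x - k c) < - k c)).
  - intros x [a b]. unfold Rabs in b. destruct (Rcase_abs (k x - k c)); lra.
  - apply filter_inter; auto. apply hk; auto; lra.
Qed.

Lemma push_agree X Y (U : filt X) (A : X -> Prop) (f g : X -> Y) : is_filter U -> U A ->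
  (forall x, A x -> f x = g x) -> pushf f U = pushf g U.
Proof.
  intros HU HA E. apply filt_ext. intros S. unfold pushf. split; intros H.
  - apply (filter_mono HU (fun x => A x /\ S (f x))). intros x [a b]. rewrite <- E; auto.
    apply filter_inter; auto.
  - apply (filter_mono HU (fun x => A x /\ S (g x))). intros x [a b]. rewrite E; auto.
    apply filter_inter; auto.
Qed.

Lemma glue (C X : PsStr) (h g1 g2 : C -> X) (k : C -> R) : conv_ultra C -> rcont C k ->
  continuous C X g1 -> continuous C X g2 ->
  (forall c, k c <= 0 -> h c = g1 c) -> (forall c, k c >= 0 -> h c = g2 c) -> continuous C X h.
Proof.
  intros hC hk h1 h2 e1 e2 U c H. pose proof (hC _ _ H) as HUu. pose proof (ultra_filter HUu) as HU.
  destruct (proj2 HUu (fun x => k x <= 0)) as [A|A].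
  - rewrite (e1 c (@closed_le C k U c hk H HU A)). rewrite (@push_agree C X U _ h g1 HU A e1). apply h1; auto.
  - assert (A' : U (fun x => k x >= 0)).
    { apply (filter_mono HU _ _ (fun x (hx : ~ k x <= 0) => Rle_ge _ _ (Rlt_le _ _ (Rnot_le_lt _ _ hx))) A). }
    rewrite (e2 c (@closed_ge C k U c hk H HU A')). rewrite (@push_agree C X U _ h g2 HU A' e2). apply h2; auto.
Qed.


Definition EPs (X : PsStr) (s : filt (CF Ips X) -> CF Ips X -> Prop) : PsStr :=
  {| pcar := CF Ips X; conv := s |}.

Lemma Omega_ext (X : PsStr) s (x0 : X) (l l' : OmegaPs s x0) :
  (forall t, loopf l t = loopf l' t) -> l = l'.
Proof.
  destruct l as [[f pf] pl], l' as [[f' pf'] pl']. unfold loopf; simpl. intros E.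
  assert (f = f') by (apply functional_extensionality; exact E). subst f'.
  assert (pf = pf') by apply proof_irrelevance. subst pf'.
  f_equal. apply proof_irrelevance.
Qed.

Lemma loop_x0 (X : PsStr) s (x0 : X) (l : OmegaPs s x0) t : v t = 0 \/ v t = 1 -> loopf l t = x0.
Proof.
  destruct l as [f [p0 p1]]. unfold loopf; simpl. intros [h|h].
  - replace t with I0 by (apply Icar_eq; exact (eq_sym h)). exact p0.
  - replace t with I1 by (apply Icar_eq; exact (eq_sym h)). exact p1.
Qed.

Lemma loop_clamp_x0 (X : PsStr) s (x0 : X) (l : OmegaPs s x0) a : cv a = 0 \/ cv a = 1 -> loopf l (clamp a) = x0.
Proof. intros h. apply loop_x0. exact h. Qed.

Lemma loop_clamp_eq (X : PsStr) s (x0 : X) (l : OmegaPs s x0) a b : cv a = cv b -> loopf l (clamp a) = loopf l (clamp b).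
Proof. intros h. f_equal. apply Icar_eq. exact h. Qed.

Lemma loop_clamp_v (X : PsStr) s (x0 : X) (l : OmegaPs s x0) a t : cv a = v t -> loopf l (clamp a) = loopf l t.
Proof. intros h. f_equal. apply Icar_eq. exact h. Qed.

Lemma rcont_minus (C : PsStr) f g : rcont C f -> rcont C g -> rcont C (fun x => f x - g x).
Proof.
  intros hf hg. unfold Rminus. apply rcont_plus; auto.
  assert (E : (fun x => - g x) = (fun x => -1 * g x)) by (apply functional_extensionality; intros; ring).
  rewrite E. apply rcont_scal; auto.
Qed.

Lemma conv_ultra_I : conv_ultra Ips.
Proof. intros U x [h _]; exact h. Qed.

Lemma pseudotop_ultra (C : PsStr) : pseudotop C -> conv_ultra C.
Proof. intros [h _]; exact h. Qed.

Lemma cont_loop_eval (X : PsStr) s (x0 : X) (C : PsStr) (pi : C -> OmegaPs s x0) (phi : C -> Ips) :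
  continuous (prodPs (EPs s) Ips) X (fun p => proj1_sig (fst p) (snd p)) ->
  conv_ultra C -> continuous C (OmegaPs s x0) pi -> continuous C Ips phi ->
  continuous C X (fun c => loopf (pi c) (phi c)).
Proof.
  intros hev hC hpi hphi.
  apply (cont_comp (B := prodPs (EPs s) Ips) (f := fun c => (proj1_sig (pi c), phi c)) (g := fun p => proj1_sig (fst p) (snd p))); auto.
  apply cont_pair; auto.
  apply (cont_comp (B := OmegaPs s x0) (f := pi) (g := fun l => proj1_sig l)); auto.
  apply cont_proj1.
Qed.

Lemma mk_Omega (X : PsStr) s (x0 : X) (C : PsStr) (h : prodPs C Ips -> X) :
  conv_ultra C ->
  (exists hc : C -> EPs s, continuous C (EPs s) hc /\ forall c a, proj1_sig (hc c) a = h (c, a)) ->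
  (forall c, h (c, I0) = x0) -> (forall c, h (c, I1) = x0) ->
  exists H : C -> OmegaPs s x0, continuous C (OmegaPs s x0) H /\ forall c t, loopf (H c) t = h (c, t).
Proof.
  intros hC [hc [hcc hce]] e0 e1.
  assert (P : forall c, proj1_sig (hc c) I0 = x0 /\ proj1_sig (hc c) I1 = x0).
  { intros c. rewrite !hce. auto. }
  exists (fun c => exist _ (hc c) (P c)). split.
  - apply cont_into_sub; auto.
  - intros c t. unfold loopf; simpl. apply hce.
Qed.

Open Scope R_scope.
Set Implicit Arguments.

Ltac creal := unfold cv, Rmax, Rmin in *; rdest; try nra.

Lemma rcont_t (A : PsStr) : rcont (prodPs A Ips) (fun p => v (snd p)).
Proof. apply rcont_I. exact (@cont_snd A Ips). Qed.
Lemma rcont_s (A : PsStr) : rcont (prodPs (prodPs A Ips) Ips) (fun p => v (snd (fst p))).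
Proof. apply rcont_I. exact (@cont_comp _ _ _ _ _ (@cont_fst (prodPs A Ips) Ips) (@cont_snd A Ips)). Qed.
Lemma cont_ff (A B C : PsStr) : continuous (prodPs (prodPs A B) C) A (fun p => fst (fst p)).
Proof. intros U x [_ [[_ [h _]] _]]. exact h. Qed.
Lemma cont_sf (A B C : PsStr) : continuous (prodPs (prodPs A B) C) B (fun p => snd (fst p)).
Proof. intros U x [_ [[_ [_ h]] _]]. exact h. Qed.

Ltac rc := repeat first [apply rcont_t | apply rcont_s | apply rcont_const | apply rcont_minus | apply rcont_plus | apply rcont_scal | apply rcont_cv | apply rcont_mult ].

Lemma cle (X : PsStr) s (x0 : X) (A : PsStr) (pi : prodPs A Ips -> OmegaPs s x0) (g : prodPs A Ips -> R) :
  continuous (prodPs (EPs s) Ips) X (fun p => proj1_sig (fst p) (snd p)) ->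
  continuous (prodPs A Ips) (OmegaPs s x0) pi -> rcont (prodPs A Ips) g ->
  continuous (prodPs A Ips) X (fun p => loopf (pi p) (clamp (g p))).
Proof.
  intros hev hpi hg.
  refine (@cont_loop_eval X s x0 (prodPs A Ips) pi (fun p => clamp (g p)) hev (@conv_ultra_prod _ _) hpi _).
  apply cont_clamp; [apply conv_ultra_prod|exact hg].
Qed.

Ltac bnd := let p := fresh "p" in intros p; pose proof (v_bounds (snd p)); pose proof (v_bounds (snd (fst p)));
  unfold v in *; unfold cv, Rmax, Rmin, Rabs in *; rdest; adest; nra.

Lemma pc r : proj1_sig (clamp r) = cv r.
Proof. reflexivity. Qed.

Ltac cs := unfold v, cv, Rmax, Rmin; rdest; nra.
Ltac fin := rewrite ?pc; unfold v in *; change (proj1_sig I0) with 0 in *; change (proj1_sig I1) with 1 in *; unfold cv, Rmax, Rmin; rdest;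
  first [ exfalso; nra | reflexivity
        | apply loop_clamp_eq; cs | apply loop_clamp_v; cs
        | apply loop_clamp_x0; solve [left; cs | right; cs]
        | symmetry; apply loop_clamp_x0; solve [left; cs | right; cs]
        | rewrite loop_clamp_x0; [symmetry; apply loop_clamp_x0|]; solve [left; cs | right; cs] ].

Lemma cv_le0 r : r <= 0 -> cv r = 0.
Proof. unfold cv, Rmax, Rmin; intros; rdest; lra. Qed.
Lemma cv_ge1 r : 1 <= r -> cv r = 1.
Proof. unfold cv, Rmax, Rmin; intros; rdest; lra. Qed.
Lemma cv_id' r : 0 <= r -> r <= 1 -> cv r = r.
Proof. intros; apply cv_id; lra. Qed.
Ltac cvsimp := repeat match goal with |- context [cv ?r] => lazymatch r with context [cv _] => fail | _ =>
  first [rewrite (@cv_le0 r) by lra | rewrite (@cv_ge1 r) by lra | rewrite (@cv_id' r) by lra] end end.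
Ltac cs2 := unfold v, cv, Rmax, Rmin; rdest; lra.
Ltac fin2 := rewrite ?pc; unfold v in *; change (proj1_sig I0) with 0 in *; change (proj1_sig I1) with 1 in *;
  cvsimp; rdest;
  first [ exfalso; lra | reflexivity
        | apply loop_clamp_eq; cs2 | apply loop_clamp_v; cs2
        | apply loop_clamp_x0; solve [left; cs2 | right; cs2]
        | symmetry; apply loop_clamp_x0; solve [left; cs2 | right; cs2]
        | rewrite loop_clamp_x0; [symmetry; apply loop_clamp_x0|]; solve [left; cs2 | right; cs2] ].

Lemma main_abstract (X : PsStr) (x0 : X) s (P : PsStr -> Prop)
  (hX : pseudotop X)
  (hprod : forall A B, P A -> P B -> P (prodPs A B))
  (hPI : P Ips) (hPO : P (OmegaPs s x0))
  (hPu : forall C, P C -> conv_ultra C)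
  (hev : continuous (prodPs (EPs s) Ips) X (fun p => proj1_sig (fst p) (snd p)))
  (htr : forall C, P C -> forall h : prodPs C Ips -> X, continuous (prodPs C Ips) X h ->
     exists hc : C -> EPs s, continuous C (EPs s) hc /\ forall c a, proj1_sig (hc c) a = h (c,a)) :
  loops_Hgroup x0 s.
Proof.
  assert (ecf : continuous Ips X (fun _ => x0)) by (apply cont_const; auto; exact conv_ultra_I).
  pose (ec := exist _ (fun _ : Ips => x0) ecf : CF Ips X).
  pose (e := exist _ ec (conj eq_refl eq_refl) : OmegaPs s x0).
  pose (hw := fun p : prodPs (prodPs (OmegaPs s x0) (OmegaPs s x0)) Ips =>
     concat_fun (loopf (fst (fst p))) (loopf (snd (fst p))) (snd p)).
  assert (hwc : continuous _ X hw).
  { apply glue with (k := fun p => v (snd p) - 1/2)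
      (g1 := fun p => loopf (fst (fst p)) (clamp (2 * v (snd p))))
      (g2 := fun p => loopf (snd (fst p)) (clamp (2 * v (snd p) - 1))).
    - apply conv_ultra_prod.
    - apply rcont_minus; [apply rcont_t | apply rcont_const].
    - eapply cont_loop_eval; [exact hev|apply conv_ultra_prod| |].
      apply cont_ff.
      apply cont_clamp. apply conv_ultra_prod. apply rcont_scal, rcont_t.
    - eapply cont_loop_eval; [exact hev|apply conv_ultra_prod| |].
      apply cont_sf.
      apply cont_clamp. apply conv_ultra_prod.
      apply rcont_minus; [apply rcont_scal, rcont_t | apply rcont_const].
    - intros [[l l'] t]. unfold hw, concat_fun. cbn [fst snd]. unfold v. intros h.
      destruct Rle_dec; [reflexivity|lra].
    - intros [[l l'] t]. unfold hw, concat_fun. cbn [fst snd]. intros h.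
      destruct Rle_dec as [r|r]; [|reflexivity].
      pose proof (v_bounds t). unfold v in *.
      rewrite !loop_clamp_x0; auto; creal. }
  assert (PO2 : P (prodPs (OmegaPs s x0) (OmegaPs s x0))) by auto.
  assert (hw0 : forall c, hw (c, I0) = x0).
  { intros [l l']. unfold hw, concat_fun. cbn [fst snd proj1_sig I0].
    destruct Rle_dec; [apply loop_clamp_x0; left; creal | simpl in *; lra]. }
  assert (hw1 : forall c, hw (c, I1) = x0).
  { intros [l l']. unfold hw, concat_fun. cbn [fst snd proj1_sig I1].
    destruct Rle_dec; [simpl in *; lra | apply loop_clamp_x0; right; creal]. }
  destruct (mk_Omega (s:=s) (x0:=x0) hw (hPu _ PO2) (htr _ PO2 hw hwc) hw0 hw1) as [W [Wc WE]].
  pose (hs := fun p : prodPs (OmegaPs s x0) Ips => inv_fun (loopf (fst p)) (snd p)).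
  assert (hsc : continuous _ X hs).
  { refine (@cont_loop_eval X s x0 (prodPs (OmegaPs s x0) Ips) (fun p => fst p) (fun p => clamp (1 - v (snd p))) hev (@conv_ultra_prod _ _) _ _).
    - exact (@cont_fst _ _).
    - apply cont_clamp; [apply conv_ultra_prod|]. rc. }
  assert (POI : P (prodPs (OmegaPs s x0) Ips)) by auto.
  assert (hs0 : forall c, hs (c, I0) = x0).
  { intros l. unfold hs, inv_fun. cbn [fst snd]. apply loop_clamp_x0. right. unfold v; simpl; creal. }
  assert (hs1 : forall c, hs (c, I1) = x0).
  { intros l. unfold hs, inv_fun. cbn [fst snd]. apply loop_clamp_x0. left. unfold v; simpl; creal. }
  destruct (mk_Omega (s:=s) (x0:=x0) hs (hPu _ hPO) (htr _ hPO hs hsc) hs0 hs1) as [SG [SGc SGE]].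

  pose (hru := fun p : prodPs (prodPs (OmegaPs s x0) Ips) Ips => loopf (fst (fst p)) (clamp ((1 - v (snd (fst p))) * cv (2 * v (snd p)) + v (snd (fst p)) * v (snd p)))).
  assert (hruc : continuous _ X hru).
  { unfold hru; apply cle; [exact hev | apply cont_ff | rc; bnd]. }
  assert (hru0 : forall c, hru (c, I0) = x0).
  { intros c. unfold hru. cbn [fst snd]. apply loop_clamp_x0. pose proof (v_bounds (snd c)). unfold v in *; simpl; solve [left; creal | right; creal]. }
  assert (hru1 : forall c, hru (c, I1) = x0).
  { intros c. unfold hru. cbn [fst snd]. apply loop_clamp_x0. pose proof (v_bounds (snd c)). unfold v in *; simpl; solve [left; creal | right; creal]. }
  assert (Pru : P (prodPs (OmegaPs s x0) Ips)) by auto.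
  destruct (mk_Omega (s:=s) (x0:=x0) hru (hPu _ Pru) (htr _ Pru hru hruc) hru0 hru1) as [Hru [Hruc HruE]].

  pose (hlu := fun p : prodPs (prodPs (OmegaPs s x0) Ips) Ips => loopf (fst (fst p)) (clamp ((1 - v (snd (fst p))) * cv (2 * v (snd p) - 1) + v (snd (fst p)) * v (snd p)))).
  assert (hluc : continuous _ X hlu).
  { unfold hlu; apply cle; [exact hev | apply cont_ff | rc; bnd]. }
  assert (hlu0 : forall c, hlu (c, I0) = x0).
  { intros c. unfold hlu. cbn [fst snd]. apply loop_clamp_x0. pose proof (v_bounds (snd c)). unfold v in *; simpl; solve [left; creal | right; creal]. }
  assert (hlu1 : forall c, hlu (c, I1) = x0).
  { intros c. unfold hlu. cbn [fst snd]. apply loop_clamp_x0. pose proof (v_bounds (snd c)). unfold v in *; simpl; solve [left; creal | right; creal]. }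
  assert (Plu : P (prodPs (OmegaPs s x0) Ips)) by auto.
  destruct (mk_Omega (s:=s) (x0:=x0) hlu (hPu _ Plu) (htr _ Plu hlu hluc) hlu0 hlu1) as [Hlu [Hluc HluE]].

  pose (hi1 := fun p : prodPs (prodPs (OmegaPs s x0) Ips) Ips => loopf (fst (fst p)) (clamp ((1 - v (snd (fst p))) * (2 * v (snd p) - 2 * cv (2 * v (snd p) - 1))))).
  assert (hi1c : continuous _ X hi1).
  { unfold hi1; apply cle; [exact hev | apply cont_ff | rc; bnd]. }
  assert (hi10 : forall c, hi1 (c, I0) = x0).
  { intros c. unfold hi1. cbn [fst snd]. apply loop_clamp_x0. pose proof (v_bounds (snd c)). unfold v in *; simpl; solve [left; creal | right; creal]. }
  assert (hi11 : forall c, hi1 (c, I1) = x0).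
  { intros c. unfold hi1. cbn [fst snd]. apply loop_clamp_x0. pose proof (v_bounds (snd c)). unfold v in *; simpl; solve [left; creal | right; creal]. }
  assert (Pi1 : P (prodPs (OmegaPs s x0) Ips)) by auto.
  destruct (mk_Omega (s:=s) (x0:=x0) hi1 (hPu _ Pi1) (htr _ Pi1 hi1 hi1c) hi10 hi11) as [Hi1 [Hi1c Hi1E]].

  pose (hi2 := fun p : prodPs (prodPs (OmegaPs s x0) Ips) Ips => loopf (fst (fst p)) (clamp (1 - (1 - v (snd (fst p))) * (2 * v (snd p) - 2 * cv (2 * v (snd p) - 1))))).
  assert (hi2c : continuous _ X hi2).
  { unfold hi2; apply cle; [exact hev | apply cont_ff | rc; bnd]. }
  assert (hi20 : forall c, hi2 (c, I0) = x0).
  { intros c. unfold hi2. cbn [fst snd]. apply loop_clamp_x0. pose proof (v_bounds (snd c)). unfold v in *; simpl; solve [left; creal | right; creal]. }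
  assert (hi21 : forall c, hi2 (c, I1) = x0).
  { intros c. unfold hi2. cbn [fst snd]. apply loop_clamp_x0. pose proof (v_bounds (snd c)). unfold v in *; simpl; solve [left; creal | right; creal]. }
  assert (Pi2 : P (prodPs (OmegaPs s x0) Ips)) by auto.
  destruct (mk_Omega (s:=s) (x0:=x0) hi2 (hPu _ Pi2) (htr _ Pi2 hi2 hi2c) hi20 hi21) as [Hi2 [Hi2c Hi2E]].

  pose (has := fun p : prodPs (prodPs (prodPs (prodPs (OmegaPs s x0) (OmegaPs s x0)) (OmegaPs s x0)) Ips) Ips => loopf (W (fst (fst (fst (fst p))), W (snd (fst (fst (fst p))), snd (fst (fst p))))) (clamp ((1 - v (snd (fst p))) * (2 * v (snd p) - cv (v (snd p) - 1/4) - 1/2 * cv (v (snd p) - 1/2)) + v (snd (fst p)) * v (snd p)))).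
  assert (hasc : continuous _ X has).
  { unfold has; apply cle; [exact hev | apply (@cont_comp _ (prodPs (OmegaPs s x0) (OmegaPs s x0)) _ _ W); [|exact Wc]; apply cont_pair; [apply conv_ultra_prod| |]; [intros U x Hc; do 4 destruct Hc as [_ [Hc _]]; exact Hc|]; apply (@cont_comp _ (prodPs (OmegaPs s x0) (OmegaPs s x0)) _ _ W); [|exact Wc]; apply cont_pair; [apply conv_ultra_prod| |]; intros U x Hc; [do 3 destruct Hc as [_ [Hc _]]; destruct Hc as [_ [_ Hc]]; exact Hc| do 2 destruct Hc as [_ [Hc _]]; destruct Hc as [_ [_ Hc]]; exact Hc] | rc; bnd]. }
  assert (has0 : forall c, has (c, I0) = x0).
  { intros c. unfold has. cbn [fst snd]. apply loop_clamp_x0. pose proof (v_bounds (snd c)). unfold v in *; simpl; solve [left; creal | right; creal]. }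
  assert (has1 : forall c, has (c, I1) = x0).
  { intros c. unfold has. cbn [fst snd]. apply loop_clamp_x0. pose proof (v_bounds (snd c)). unfold v in *; simpl; solve [left; creal | right; creal]. }
  assert (Pas : P (prodPs (prodPs (prodPs (OmegaPs s x0) (OmegaPs s x0)) (OmegaPs s x0)) Ips)) by auto.
  destruct (mk_Omega (s:=s) (x0:=x0) has (hPu _ Pas) (htr _ Pas has hasc) has0 has1) as [Has [Hasc HasE]].
  assert (le : forall t, loopf e t = x0) by reflexivity.
  exists e, W, SG.
  split; [intros; reflexivity|].
  split; [intros; rewrite WE; reflexivity|].
  split; [intros; rewrite SGE; reflexivity|].
  split; [exact Wc|].
  assert (Wee : W (e, e) = e) by (apply Omega_ext; intros t; rewrite WE; unfold hw, concat_fun; cbn [fst snd]; destruct Rle_dec; reflexivity).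
  split; [exact Wee|].
  split; [exact SGc|].
  split; [apply Omega_ext; intros t; rewrite SGE; reflexivity|].
  split.
  { exists Hru. split; [exact Hruc|]. split; [|split].
    - intros a. apply Omega_ext; intros t. rewrite HruE, WE. unfold hru, hw, concat_fun. cbn [fst snd]. rewrite ?le.
      pose proof (v_bounds t). fin.
    - intros a. apply Omega_ext; intros t. rewrite HruE. unfold hru. cbn [fst snd].
      pose proof (v_bounds t). fin.
    - intros sp. apply Omega_ext; intros t. rewrite HruE. reflexivity. }
  split.
  { exists Hlu. split; [exact Hluc|]. split; [|split].
    - intros a. apply Omega_ext; intros t. rewrite HluE, WE. unfold hlu, hw, concat_fun, hs, inv_fun. cbn [fst snd]. rewrite ?le.
      pose proof (v_bounds t). fin.
    - intros a. apply Omega_ext; intros t. rewrite HluE. unfold hlu. cbn [fst snd]. rewrite ?le.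
      pose proof (v_bounds t). fin.
    - intros sp. apply Omega_ext; intros t. rewrite HluE. reflexivity. }
  split.
  { exists Hi1. split; [exact Hi1c|]. split; [|split].
    - intros a. apply Omega_ext; intros t. rewrite Hi1E, WE. unfold hi1, hw, concat_fun, hs, inv_fun. cbn [fst snd]. rewrite ?SGE. unfold hs, inv_fun. cbn [fst snd]. rewrite ?le.
      pose proof (v_bounds t). fin.
    - intros a. apply Omega_ext; intros t. rewrite Hi1E. unfold hi1. cbn [fst snd]. rewrite ?le.
      pose proof (v_bounds t). fin.
    - intros sp. apply Omega_ext; intros t. rewrite Hi1E. reflexivity. }
  split.
  { exists Hi2. split; [exact Hi2c|]. split; [|split].
    - intros a. apply Omega_ext; intros t. rewrite Hi2E, WE. unfold hi2, hw, concat_fun, hs, inv_fun. cbn [fst snd]. rewrite ?SGE. unfold hs, inv_fun. cbn [fst snd]. rewrite ?le.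
      pose proof (v_bounds t). fin.
    - intros a. apply Omega_ext; intros t. rewrite Hi2E. unfold hi2. cbn [fst snd]. rewrite ?le.
      pose proof (v_bounds t). fin.
    - intros sp. apply Omega_ext; intros t. rewrite Hi2E. reflexivity. }
  { exists Has. split; [exact Hasc|]. split; [|split].
    - intros [[l1 l2] l3]. apply Omega_ext; intros t. rewrite HasE. unfold has. cbn [fst snd].
      repeat (rewrite WE; unfold hw, concat_fun; cbn [fst snd]).
      pose proof (v_bounds t). unfold v in *.
      destruct (Rle_lt_dec (proj1_sig t) (1/4)); [|destruct (Rle_lt_dec (proj1_sig t) (1/2))]; fin2.
    - intros [[l1 l2] l3]. apply Omega_ext; intros t. rewrite HasE. unfold has. cbn [fst snd].
      pose proof (v_bounds t). fin2.
    - intros sp. apply Omega_ext; intros t. rewrite HasE. unfold has. cbn [fst snd]. rewrite !Wee. reflexivity. }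
Qed.

Open Scope R_scope.
Set Implicit Arguments.

Lemma conv_fconv (X : PsStr) U x : is_ultra U -> conv X U x -> fconv X U x.
Proof.
  intros HU h W HW Wf. rewrite (@ultra_max _ U W HU (ultra_filter HW) Wf). exact h.
Qed.

Lemma exp_ev (A B : PsStr) : continuous (prodPs (expPs A B) A) B (fun p => proj1_sig (fst p) (snd p)).
Proof.
  intros U [f a] [HU [[_ Hf] Ha]].
  pose proof (ultra_filter HU) as HUf.
  assert (Hs : is_ultra (pushf snd U)) by (apply ultra_push; exact HU).
  specialize (Hf (pushf snd U) a (ultra_filter Hs) (@conv_fconv _ _ _ Hs Ha)).
  apply Hf. apply ultra_push; exact HU.
  intros S [A1 [B1 [h1 [h2 h3]]]]. unfold pushf in *.
  apply (filter_mono HUf (fun p => A1 (fst p) /\ B1 (snd p))).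
  - intros p [x y]. exact (h3 _ _ x y).
  - apply filter_inter; auto.
Qed.

Lemma exp_transpose (A B C : PsStr) (h : prodPs C A -> B) :
  pseudotop C -> conv_ultra A -> continuous (prodPs C A) B h ->
  exists hc : C -> expPs A B, continuous C (expPs A B) hc /\ forall c a, proj1_sig (hc c) a = h (c, a).
Proof.
  intros hC hA hh.
  assert (sect : forall c, continuous A B (fun a => h (c, a))).
  { intros c U a Ha. pose proof (hA _ _ Ha) as HU.
    apply (hh (pushf (fun a => (c, a)) U) (c, a)). split; [apply ultra_push; exact HU|]. split.
    - change (conv C (pushf (fun _ => c) U) c). rewrite push_const by (apply ultra_filter; exact HU).
      apply (proj2 hC).
    - exact Ha. }
  exists (fun c => exist _ (fun a => h (c, a)) (sect c)). split; [|reflexivity].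
  intros V c Hc. pose proof (proj1 hC _ _ Hc) as HV. split; [apply ultra_push; exact HV|].
  intros G a HG HGa W HW Wf. simpl.
  pose (F := fun S : C * A -> Prop => exists A1 B1 W1, V A1 /\ G B1 /\ W W1 /\
      forall c' a', A1 c' -> B1 a' -> W1 (h (c', a')) -> S (c', a')).
  pose proof (ultra_filter HV) as HVf. pose proof (ultra_filter HW) as HWf.
  assert (FF : is_filter F).
  { constructor.
    - exists (fun _ => True), (fun _ => True), (fun _ => True). repeat split; try apply filter_full; auto.
    - intros S1 S2 HS [A1 [B1 [W1 [a1 [b1 [w1 k]]]]]]. exists A1, B1, W1. repeat split; auto.
    - intros S1 S2 [A1 [B1 [W1 [a1 [b1 [w1 k]]]]]] [A2 [B2 [W2 [a2 [b2 [w2 k2]]]]]].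
      exists (fun x => A1 x /\ A2 x), (fun x => B1 x /\ B2 x), (fun x => W1 x /\ W2 x).
      split; [apply filter_inter; auto|]. split; [apply filter_inter; auto|]. split; [apply filter_inter; auto|].
      intros c9 a9 [] [] []; split; auto.
    - intros [A1 [B1 [W1 [a1 [b1 [w1 k]]]]]].
      apply (filter_proper HWf). apply (filter_mono HWf (fun y => W1 y /\ ~ W1 y)); [intros y []; auto|].
      apply filter_inter; auto. apply Wf.
      exists (fun f => exists c', A1 c' /\ f = exist _ (fun a => h (c', a)) (sect c')), B1.
      split; [|split; auto].
      + unfold pushf. apply (filter_mono HVf A1); auto. intros c' hc'. exists c'; auto.
      + intros f b [c' [hc' ->]] hb. unfold evCF; simpl. intros hw. exact (k c' b hc' hb hw). }
  destruct (@ultra_lemma _ _ FF) as [Q [HQ FQ]].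
  pose proof (ultra_filter HQ) as HQf.
  assert (E1 : pushf fst Q = V).
  { apply ultra_max; auto. apply ultra_filter, ultra_push; exact HQ.
    intros S hS. apply FQ. exists S, (fun _ => True), (fun _ => True). repeat split; auto; apply filter_full; auto. }
  assert (Hconv : conv (prodPs C A) Q (c, a)).
  { split; auto. split.
    - simpl. rewrite E1. exact Hc.
    - apply HGa. apply ultra_push; exact HQ.
      intros S hS. apply FQ. exists (fun _ => True), S, (fun _ => True). repeat split; auto; apply filter_full; auto. }
  pose proof (hh _ _ Hconv) as Hr.
  assert (E2 : pushf h Q = W).
  { apply ultra_max; auto. apply ultra_filter, ultra_push; exact HQ.
    intros S hS. apply FQ. exists (fun _ => True), (fun _ => True), S. repeat split; auto; apply filter_full; auto. }
  rewrite E2 in Hr. exact Hr.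
Qed.

Lemma exp_pseudotop (A B : PsStr) : pseudotop B -> pseudotop (expPs A B).
Proof.
  intros hB. split; [intros U x [h _]; exact h|].
  intros f. split; [apply principal_ultra|].
  intros G a HG HGa W HW Wf. simpl.
  pose (F := fun S : A -> Prop => exists B1 W1, G B1 /\ W W1 /\ forall a', B1 a' -> W1 (proj1_sig f a') -> S a').
  pose proof (ultra_filter HW) as HWf.
  assert (FF : is_filter F).
  { constructor.
    - exists (fun _ => True), (fun _ => True). repeat split; try apply filter_full; auto.
    - intros S1 S2 HS [B1 [W1 [b1 [w1 k]]]]. exists B1, W1. repeat split; auto.
    - intros S1 S2 [B1 [W1 [b1 [w1 k]]]] [B2 [W2 [b2 [w2 k2]]]].
      exists (fun x => B1 x /\ B2 x), (fun x => W1 x /\ W2 x).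
      split; [apply filter_inter; auto|]. split; [apply filter_inter; auto|].
      intros a9 [] []; split; auto.
    - intros [B1 [W1 [b1 [w1 k]]]].
      apply (filter_proper HWf). apply (filter_mono HWf (fun y => W1 y /\ ~ W1 y)); [intros y []; auto|].
      apply filter_inter; auto. apply Wf.
      exists (fun g => g = f), B1. split; [reflexivity|split; auto].
      intros g b -> hb. unfold evCF; simpl. intros hw. exact (k b hb hw). }
  destruct (@ultra_lemma _ _ FF) as [Q [HQ FQ]].
  assert (Ha : conv A Q a).
  { apply HGa; auto. intros S hS. apply FQ. exists S, (fun _ => True). repeat split; auto; apply filter_full; auto. }
  pose proof (proj2_sig f _ _ Ha) as Hr.
  assert (E2 : pushf (proj1_sig f) Q = W).
  { apply ultra_max; auto. apply ultra_filter, ultra_push; exact HQ.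
    intros S hS. apply FQ. exists (fun _ => True), S. repeat split; auto; apply filter_full; auto. }
  simpl in Hr. rewrite E2 in Hr. exact Hr.
Qed.

Unset Implicit Arguments.
Open Scope R_scope.

Lemma pseudotop_prod (A B : PsStr) : pseudotop A -> pseudotop B -> pseudotop (prodPs A B).
Proof.
  intros hA hB. split; [intros U x [h _]; exact h|].
  intros [a b]. split; [apply principal_ultra|]. split; [apply (proj2 hA)|apply (proj2 hB)].
Qed.

Lemma pseudotop_sub (A : PsStr) (P : A -> Prop) : pseudotop A -> pseudotop (subPs A P).
Proof.
  intros hA. split; [intros U x [h _]; exact h|].
  intros x. split; [apply principal_ultra| apply (proj2 hA)].
Qed.

Lemma pseudotop_top2ps T : pseudotop (top2ps T).
Proof.
  split; [intros U x [h _]; exact h|].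
  intros x. split; [apply principal_ultra|]. intros O _ Ox. exact Ox.
Qed.

Lemma epitop_pseudo (X : PsStr) : epitop X -> pseudotop X.
Proof. intros [h _]; exact h. Qed.

Lemma epitop_prod (A B : PsStr) : epitop A -> epitop B -> epitop (prodPs A B).
Proof.
  intros [pA [J1 [Y1 [Z1 [f1 [t1 e1]]]]]] [pB [J2 [Y2 [Z2 [f2 [t2 e2]]]]]].
  split; [apply pseudotop_prod; auto|].
  exists (J1 + J2)%type, (fun j => match j with inl a => Y1 a | inr b => Y2 b end),
    (fun j => match j with inl a => Z1 a | inr b => Z2 b end),
    (fun j => match j as j0 return (prodPs A B -> expPs (top2ps (match j0 with inl a => Y1 a | inr b => Y2 b end))
                                                (top2ps (match j0 with inl a => Z1 a | inr b => Z2 b end))) with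
              | inl a => fun p => f1 a (fst p) | inr b => fun p => f2 b (snd p) end).
  split; [intros [a|b]; simpl; auto|].
  intros U [x y]. split.
  - intros [HU [hx hy]]. split; auto. apply e1 in hx. apply e2 in hy.
    intros [a|b]; simpl. exact (proj2 hx a). exact (proj2 hy b).
  - intros [HU hj]. split; auto. split.
    + apply e1. split; [apply ultra_push; auto|]. intros a. exact (hj (inl a)).
    + apply e2. split; [apply ultra_push; auto|]. intros b. exact (hj (inr b)).
Qed.

Lemma epitop_sub (A : PsStr) (P : A -> Prop) : epitop A -> epitop (subPs A P).
Proof.
  intros [pA [J [Y [Z [f [t e]]]]]].
  split; [apply pseudotop_sub; auto|].
  exists J, Y, Z, (fun j x => f j (proj1_sig x)). split; auto.
  intros U x. split.
  - intros [HU hx]. split; auto. apply e in hx. exact (proj2 hx).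
  - intros [HU hj]. split; auto. apply e. split; [apply ultra_push; auto|]. exact hj.
Qed.

Definition ptop : TopSp := {| tcar := unit; opens := fun _ => True |}.

Lemma Itop_topology : is_topology Itop.
Proof.
  split; [|split].
  - simpl. intros t _. exists 1. split; [lra|]. auto.
  - simpl. intros A B hA hB t [a b]. destruct (hA t a) as [e1 [p1 k1]]. destruct (hB t b) as [e2 [p2 k2]].
    exists (Rmin e1 e2). split; [apply Rmin_case; lra|].
    intros s hs. split; [apply k1|apply k2]; eapply Rlt_le_trans; eauto; [apply Rmin_l|apply Rmin_r].
  - simpl. intros J O hO t [j hj]. destruct (hO j t hj) as [e1 [p1 k1]]. exists e1. split; auto.
    intros s hs. exists j. auto.
Qed.

Lemma epitop_Ips : epitop Ips.
Proof.
  split; [apply pseudotop_top2ps|].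
  assert (fc : forall x : Ips, continuous (top2ps ptop) (top2ps Itop) (fun _ => x)).
  { intros x. apply cont_const. apply pseudotop_top2ps. intros U y [h _]; exact h. }
  exists unit, (fun _ => ptop), (fun _ => Itop),
    (fun _ (x : Ips) => exist _ (fun _ : unit => x) (fc x) : expPs (top2ps ptop) (top2ps Itop)).
  split.
  { intros j. split; [repeat split; simpl; auto | exact Itop_topology]. }
  intros U x. split.
  - intros [HU HO]. split; auto. intros j. split; [apply ultra_push; auto|].
    intros G u HG HGu W HW Wf. split; [exact HW|]. intros O hO Ox. apply Wf.
    exists (fun g : CF (top2ps ptop) (top2ps Itop) => O (proj1_sig g tt)), (fun _ => True).
    split; [unfold pushf; simpl; apply HO; auto|]. split; [apply filter_full; auto|].
    intros g b hg _. destruct b. exact hg.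
  - intros [HU hj]. pose proof (ultra_filter HU) as HUf. specialize (hj tt). destruct hj as [_ hj].
    assert (Hp : fconv (top2ps ptop) (principal tt) tt).
    { intros W HW Wf. split; [exact HW|]. intros O _ Ot. apply Wf. exact Ot. }
    specialize (hj (principal tt) tt (ultra_filter (principal_ultra tt)) Hp U HU).
    apply hj. intros S [A1 [B1 [a1 [b1 k]]]]. unfold pushf in a1.
    apply (filter_mono HUf _ _ (fun t (ht : A1 _) => k _ tt ht b1) a1).
Qed.

Theorem proposition5p4 :
  (forall (X : PsStr) (x0 : X), pseudotop X -> @loops_Hgroup X x0 (@exp_conv Ips X)) /\
  (forall (X' : PsStr) (x0' : X'), epitop X' ->
     forall s : filt (CF Ips X') -> CF Ips X' -> Prop,
       @epi_exp_structure Ips X' s -> @loops_Hgroup X' x0' s).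
Proof.
  split.
  - intros X x0 hX.
    apply (@main_abstract X x0 (@exp_conv Ips X) pseudotop hX).
    + intros; apply pseudotop_prod; auto.
    + apply pseudotop_top2ps.
    + apply pseudotop_sub. apply exp_pseudotop. exact hX.
    + intros C hC; exact (proj1 hC).
    + exact (@exp_ev Ips X).
    + intros C hC h hh. exact (@exp_transpose Ips X C h hC (fun U x H => proj1 H) hh).
  - intros X x0 hX s [hE [hev htr]].
    apply (@main_abstract X x0 s epitop (epitop_pseudo _ hX)).
    + intros; apply epitop_prod; auto.
    + apply epitop_Ips.
    + apply epitop_sub. exact hE.
    + intros C hC; exact (proj1 (epitop_pseudo _ hC)).
    + exact hev.
    + exact htr.
Qed.
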